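(* Let $\ell,\hat\ell:\mathbb{R}^q\times\mathbb{R}^q\to(0,1)$ with $\hat\ell$ continuous and $\hat\ell(x,\xi)\ge\ell(x,\xi)$ for all $x,\xi$. Let $s\in\mathbb{R}^q$, let $c_1,\dots,c_M\in\mathbb{R}^q$, and let $(\xi_k)_{k\in\mathbb{N}}$ be $n$-periodic ($\xi_{k+n}=\xi_k$ for all $k$). For $a,b:\mathbb{R}^q\times\mathbb{R}^q\to(0,1)$ and $x\in\mathbb{R}^q$ define $$K(s,a\,\|\,x,b;\xi_{1:n})=\sum_{k=1}^n\Big[a(s,\xi_k)\ln\frac{a(s,\xi_k)}{b(x,\xi_k)}+(1-a(s,\xi_k))\ln\frac{1-a(s,\xi_k)}{1-b(x,\xi_k)}\Big],$$ and let $$B_{\mathrm{true}}=\operatorname*{argmin}_{i\in\{1,\dots,M\}}K(s,\ell\,\|\,c_i,\hat\ell;\xi_{1:n}),\qquad B_{\mathrm{env}}=\operatorname*{argmin}_{i\in\{1,\dots,M\}}K(s,\hat\ell\,\|\,c_i,\hat\ell;\xi_{1:n}).$$ Suppose that for every $i\in\{1,\dots,M\}$ there exists $j\in B_{\mathrm{true}}$ such that $\hat\ell(c_j,\xi_k)\ge\hat\ell(c_i,\xi_k)$ for all $k\in\{1,\dots,n\}$. Then $B_{\mathrm{env}}\subset B_{\mathrm{true}}$.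
   Context: $\ell$ is the true detection-probability function and $\hat\ell$ an envelope used by the estimator in its place. The paper denotes $B_{\mathrm{true}}$ by $\mathcal{B}(\ell\mid\hat\ell)$ and $B_{\mathrm{env}}$ by $\mathcal{B}(\hat\ell\mid\hat\ell)$. *)

(* Defs.v *)
From HB Require Import structures.
From mathcomp Require Import all_boot all_order all_algebra.
From mathcomp Require Import all_classical all_reals all_analysis.
Set Implicit Arguments. Unset Strict Implicit. Unset Printing Implicit Defensive.
Import Order.TTheory GRing.Theory Num.Theory.
Import numFieldTopology.Exports numFieldNormedType.Exports.
Local Open Scope ring_scope.

Definition Kdiv (R : realType) (q : nat) (a b : 'rV[R]_q -> 'rV[R]_q -> R)
  (s x : 'rV[R]_q) (xi : nat -> 'rV[R]_q) (n : nat) : R :=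
  \sum_(1 <= k < n.+1)
    (a s (xi k) * ln (a s (xi k) / b x (xi k))
     + (1 - a s (xi k)) * ln ((1 - a s (xi k)) / (1 - b x (xi k)))).

(* argmin over i in {1..M} (indexed by 'I_M) as a finite set *)
Definition argmin_set (R : realType) (M : nat) (f : 'I_M -> R) : {set 'I_M} :=
  [set i | [forall j, f i <= f j]].

(* Main.v *)
Require Import Defs.
From HB Require Import structures.
From mathcomp Require Import all_boot all_order all_algebra.
From mathcomp Require Import all_classical all_reals all_analysis.
From mathcomp Require Import lra.
Import Order.TTheory GRing.Theory Num.Theory.
Import numFieldTopology.Exports numFieldNormedType.Exports.
Local Open Scope ring_scope.

Lemma lndiv (R : realType) (x y : R) : 0 < x -> 0 < y -> ln (x / y) = ln x - ln y.
Proof.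
move=> hx hy.
rewrite lnM ?posrE ?invr_gt0 // lnV ?posrE //.
Qed.

Lemma term_le (R : realType) (t p bi bj : R) :
  0 < t -> t <= p -> p < 1 -> 0 < bi -> bi <= bj -> bj < 1 ->
  (t * ln (t / bi) + (1 - t) * ln ((1 - t) / (1 - bi)))
  - (t * ln (t / bj) + (1 - t) * ln ((1 - t) / (1 - bj)))
  <= (p * ln (p / bi) + (1 - p) * ln ((1 - p) / (1 - bi)))
  - (p * ln (p / bj) + (1 - p) * ln ((1 - p) / (1 - bj))).
Proof.
move=> ht htp hp hbi hij hbj.
have hbj0 : 0 < bj by lra.
have h1i : 0 < 1 - bi by lra.
have h1j : 0 < 1 - bj by lra.
have h1t : 0 < 1 - t by lra.
have h1p : 0 < 1 - p by lra.
have hp0 : 0 < p by lra.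
rewrite !lndiv //.
have A : ln bi <= ln bj by rewrite ler_ln ?posrE.
have B : ln (1 - bj) <= ln (1 - bi) by rewrite ler_ln ?posrE //; lra.
nra.
Qed.

Theorem proposition4 (R : realType) (q M n : nat)
  (l lhat : 'rV[R]_q -> 'rV[R]_q -> R)
  (hl : forall x xi, 0 < l x xi < 1)
  (hlhat : forall x xi, 0 < lhat x xi < 1)
  (hcont : continuous (fun p : 'rV[R]_q * 'rV[R]_q => lhat p.1 p.2))
  (hge : forall x xi, l x xi <= lhat x xi)
  (s : 'rV[R]_q) (c : 'I_M -> 'rV[R]_q) (xi : nat -> 'rV[R]_q)
  (hper : forall k, xi (k + n)%N = xi k)
  (hdom : forall i : 'I_M, exists2 j : 'I_M,
     j \in argmin_set (fun i' => Kdiv l lhat s (c i') xi n) &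
     forall k, (1 <= k <= n)%N -> lhat (c i) (xi k) <= lhat (c j) (xi k)) :
  argmin_set (fun i => Kdiv lhat lhat s (c i) xi n)
  \subset argmin_set (fun i => Kdiv l lhat s (c i) xi n).
Proof.
apply/fintype.subsetP => i; rewrite !inE => /forallP Hi.
have [j] := hdom i; rewrite inE => /forallP Hj Hij.
apply/forallP => m; apply: le_trans (Hj m).
have Henv := Hi j.
suff : Kdiv l lhat s (c i) xi n - Kdiv l lhat s (c j) xi n
       <= Kdiv lhat lhat s (c i) xi n - Kdiv lhat lhat s (c j) xi n by lra.
rewrite /Kdiv -!sumrB big_nat [X in _ <= X]big_nat.
apply: ler_sum => k /andP [hk1 hk2].
have := hl s (xi k); have := hlhat s (xi k); have := hlhat (c i) (xi k);
  have := hlhat (c j) (xi k) => /andP[? ?] /andP[? ?] /andP[? ?] /andP[? ?].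
apply: term_le => //.
by apply: Hij; rewrite hk1 -ltnS.
Qed.
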